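(* (a) QHC is a strongly conservative extension of classical predicate calculus QC: if $p_1,\dots,p_n\vdash_{\mathrm{QHC}} p$ where $p_1,\dots,p_n,p$ are propositions built from atomic propositions and $0$ using only classical connectives and quantifiers (no $!$, $?$), then $p_1,\dots,p_n\vdash_{\mathrm{QC}} p$. (b) QHC is a strongly conservative extension of QS4 via $\Box\mapsto ?!$: if $A_1,\dots,A_n, A$ are formulas of QS4 and the rule $A_1^*,\dots,A_n^*\,/\,A^*$ is derivable in QHC, where $B^*$ denotes the result of replacing every $\Box$ in $B$ by $?!$, then $A_1,\dots,A_n\vdash_{\mathrm{QS4}} A$.
   Context: QHC is a two-sorted first-order calculus. Its only terms are individual variables. Every formula is either a problem (denoted by Greek letters $\alpha,\beta,\gamma,\dots$) or a proposition (denoted by Latin letters $p,q,\dots$). Atomic formulas are proposition variables $p(t_1,\dots,t_n)$ (of proposition type), problem variables $\pi(t_1,\dots,t_n)$ (of problem type), and the constants $0$ (a proposition, classical falsity) and $\bot$ (a problem, intuitionistic absurdity). Propositions are closed under the classical connectives $\land,\lor,\to$ and quantifiers $\exists,\forall$; problems are closed under the intuitionistic connectives $\land,\lor,\to$ and quantifiers $\exists,\forall$ (the same symbols are used, distinguished by the type of the arguments). $\neg p$ abbreviates $p\to 0$, $\neg\alpha$ abbreviates $\alpha\to\bot$, and $\leftrightarrow$ is defined as usual. There are two type-conversion operators: if $p$ is a proposition then $!p$ is a problem, and if $\alpha$ is a problem then $?\alpha$ is a proposition. Deductive system of QHC: all axioms and rules of classical predicate logic applied to all propositions; all postulates and rules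 of intuitionistic predicate logic applied to all problems; the rules $p\,/\,!p$ and $\alpha\,/\,?\alpha$; and the schemas $?!p\to p$; $\alpha\to\, !?\alpha$; $!(p\to q)\to(!p\to !q)$; $?(\alpha\to\beta)\to(?\alpha\to ?\beta)$; $!0\to\bot$; $?(\alpha\land\beta)\leftrightarrow ?\alpha\land ?\beta$; $?(\alpha\lor\beta)\leftrightarrow ?\alpha\lor ?\beta$; $?\bot\to 0$; $?\exists x\,\alpha(x)\leftrightarrow\exists x\,?\alpha(x)$; $?\forall x\,\alpha(x)\to\forall x\,?\alpha(x)$ (usual variable side conditions implicit). $\vdash A$ means $A$ is derivable in QHC; $A\Rightarrow B$ means $\vdash A\to B$ and $A\Leftrightarrow B$ means $\vdash A\leftrightarrow B$ (with $A,B$ of the same type); $A\vdash B$ means $B$ is derivable in QHC from the premise $A$. Notation: $\Box p := ?!p$ (a proposition) and $\nabla\alpha := !?\alpha$ (a problem). QC and QH denote classical and intuitionistic predicate calculus. QS4 is classical predicate calculus (over the proposition variables of QHC) with a unary connective $\Box$, axiom schemes $\Box p\to p$, $\Box p\to\Box\Box p$, $\Box(p\to q)\to(\Box p\to\Box q)$ and rule $p\,/\,\Box p$. *)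

(* Defs.v *)
From Stdlib Require Import List.
Import ListNotations.

(* Individual variables are de Bruijn indices (nat); the only terms are variables,
   so every substitution is a renaming of variables. *)
Definition up (r : nat -> nat) : nat -> nat :=
  fun n => match n with 0 => 0 | S k => S (r k) end.
Definition inst (t : nat) : nat -> nat :=
  fun n => match n with 0 => t | S k => k end.

(* propositions (classical sort) and problems (intuitionistic sort) *)
Inductive prop : Type :=
| PVar   : nat -> list nat -> prop
| PFalse : prop
| PAnd   : prop -> prop -> prop
| POr    : prop -> prop -> prop
| PImp   : prop -> prop -> prop
| PEx    : prop -> prop
| PAll   : prop -> prop
| PQuest : prob -> prop
with prob : Type :=
| QVar   : nat -> list nat -> prob
| QBot   : prob
| QAnd   : prob -> prob -> prob
| QOr    : prob -> prob -> prob
| QImp   : prob -> prob -> prob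
| QEx    : prob -> prob
| QAll   : prob -> prob
| QBang  : prop -> prob.

Fixpoint renP (r : nat -> nat) (p : prop) : prop :=
  match p with
  | PVar i l => PVar i (map r l)
  | PFalse => PFalse
  | PAnd a b => PAnd (renP r a) (renP r b)
  | POr a b => POr (renP r a) (renP r b)
  | PImp a b => PImp (renP r a) (renP r b)
  | PEx a => PEx (renP (up r) a)
  | PAll a => PAll (renP (up r) a)
  | PQuest a => PQuest (renQ r a)
  end
with renQ (r : nat -> nat) (a : prob) : prob :=
  match a with
  | QVar i l => QVar i (map r l)
  | QBot => QBot
  | QAnd x y => QAnd (renQ r x) (renQ r y)
  | QOr x y => QOr (renQ r x) (renQ r y)
  | QImp x y => QImp (renQ r x) (renQ r y)
  | QEx x => QEx (renQ (up r) x)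
  | QAll x => QAll (renQ (up r) x)
  | QBang p => QBang (renP r p)
  end.

Definition PIff (a b : prop) : prop := PAnd (PImp a b) (PImp b a).

(* Derivability from a list G of premises (propositions); premises are leaves of
   derivations and all rules (including generalization, p/!p, alpha/?alpha) apply. *)
Inductive DerP (G : list prop) : prop -> Prop :=
| DP_hyp  : forall p, In p G -> DerP G p
| DP_K    : forall a b, DerP G (PImp a (PImp b a))
| DP_S    : forall a b c, DerP G (PImp (PImp a (PImp b c)) (PImp (PImp a b) (PImp a c)))
| DP_AndE1 : forall a b, DerP G (PImp (PAnd a b) a)
| DP_AndE2 : forall a b, DerP G (PImp (PAnd a b) b)
| DP_AndI : forall a b, DerP G (PImp a (PImp b (PAnd a b)))
| DP_OrI1 : forall a b, DerP G (PImp a (POr a b))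
| DP_OrI2 : forall a b, DerP G (PImp b (POr a b))
| DP_OrE  : forall a b c, DerP G (PImp (PImp a c) (PImp (PImp b c) (PImp (POr a b) c)))
| DP_EFQ  : forall a, DerP G (PImp PFalse a)
| DP_DNE  : forall a, DerP G (PImp (PImp (PImp a PFalse) PFalse) a)
| DP_AllE : forall a t, DerP G (PImp (PAll a) (renP (inst t) a))
| DP_ExI  : forall a t, DerP G (PImp (renP (inst t) a) (PEx a))
| DP_MP   : forall a b, DerP G (PImp a b) -> DerP G a -> DerP G b
| DP_Gen  : forall a b, DerP G (PImp (renP S b) a) -> DerP G (PImp b (PAll a))
| DP_ExR  : forall a b, DerP G (PImp a (renP S b)) -> DerP G (PImp (PEx a) b)
| DP_quest : forall a, DerQ G a -> DerP G (PQuest a)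
| DP_qb   : forall p, DerP G (PImp (PQuest (QBang p)) p)
| DP_qimp : forall a b, DerP G (PImp (PQuest (QImp a b)) (PImp (PQuest a) (PQuest b)))
| DP_qand : forall a b, DerP G (PIff (PQuest (QAnd a b)) (PAnd (PQuest a) (PQuest b)))
| DP_qor  : forall a b, DerP G (PIff (PQuest (QOr a b)) (POr (PQuest a) (PQuest b)))
| DP_qbot : DerP G (PImp (PQuest QBot) PFalse)
| DP_qex  : forall a, DerP G (PIff (PQuest (QEx a)) (PEx (PQuest a)))
| DP_qall : forall a, DerP G (PImp (PQuest (QAll a)) (PAll (PQuest a)))
with DerQ (G : list prop) : prob -> Prop :=
| DQ_K    : forall a b, DerQ G (QImp a (QImp b a))
| DQ_S    : forall a b c, DerQ G (QImp (QImp a (QImp b c)) (QImp (QImp a b) (QImp a c)))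
| DQ_AndE1 : forall a b, DerQ G (QImp (QAnd a b) a)
| DQ_AndE2 : forall a b, DerQ G (QImp (QAnd a b) b)
| DQ_AndI : forall a b, DerQ G (QImp a (QImp b (QAnd a b)))
| DQ_OrI1 : forall a b, DerQ G (QImp a (QOr a b))
| DQ_OrI2 : forall a b, DerQ G (QImp b (QOr a b))
| DQ_OrE  : forall a b c, DerQ G (QImp (QImp a c) (QImp (QImp b c) (QImp (QOr a b) c)))
| DQ_EFQ  : forall a, DerQ G (QImp QBot a)
| DQ_AllE : forall a t, DerQ G (QImp (QAll a) (renQ (inst t) a))
| DQ_ExI  : forall a t, DerQ G (QImp (renQ (inst t) a) (QEx a))
| DQ_MP   : forall a b, DerQ G (QImp a b) -> DerQ G a -> DerQ G b
| DQ_Gen  : forall a b, DerQ G (QImp (renQ S b) a) -> DerQ G (QImp b (QAll a))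
| DQ_ExR  : forall a b, DerQ G (QImp a (renQ S b)) -> DerQ G (QImp (QEx a) b)
| DQ_bang : forall p, DerP G p -> DerQ G (QBang p)
| DQ_bq   : forall a, DerQ G (QImp a (QBang (PQuest a)))
| DQ_bimp : forall p q, DerQ G (QImp (QBang (PImp p q)) (QImp (QBang p) (QBang q)))
| DQ_bfalse : DerQ G (QImp (QBang PFalse) QBot).

Inductive cform : Type :=
| CVar   : nat -> list nat -> cform
| CFalse : cform
| CAnd   : cform -> cform -> cform
| COr    : cform -> cform -> cform
| CImp   : cform -> cform -> cform
| CEx    : cform -> cform
| CAll   : cform -> cform.

Fixpoint renC (r : nat -> nat) (p : cform) : cform :=
  match p with
  | CVar i l => CVar i (map r l)
  | CFalse => CFalse
  | CAnd a b => CAnd (renC r a) (renC r b)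
  | COr a b => COr (renC r a) (renC r b)
  | CImp a b => CImp (renC r a) (renC r b)
  | CEx a => CEx (renC (up r) a)
  | CAll a => CAll (renC (up r) a)
  end.

Inductive DerC (G : list cform) : cform -> Prop :=
| DC_hyp  : forall p, In p G -> DerC G p
| DC_K    : forall a b, DerC G (CImp a (CImp b a))
| DC_S    : forall a b c, DerC G (CImp (CImp a (CImp b c)) (CImp (CImp a b) (CImp a c)))
| DC_AndE1 : forall a b, DerC G (CImp (CAnd a b) a)
| DC_AndE2 : forall a b, DerC G (CImp (CAnd a b) b)
| DC_AndI : forall a b, DerC G (CImp a (CImp b (CAnd a b)))
| DC_OrI1 : forall a b, DerC G (CImp a (COr a b))
| DC_OrI2 : forall a b, DerC G (CImp b (COr a b))
| DC_OrE  : forall a b c, DerC G (CImp (CImp a c) (CImp (CImp b c) (CImp (COr a b) c)))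
| DC_EFQ  : forall a, DerC G (CImp CFalse a)
| DC_DNE  : forall a, DerC G (CImp (CImp (CImp a CFalse) CFalse) a)
| DC_AllE : forall a t, DerC G (CImp (CAll a) (renC (inst t) a))
| DC_ExI  : forall a t, DerC G (CImp (renC (inst t) a) (CEx a))
| DC_MP   : forall a b, DerC G (CImp a b) -> DerC G a -> DerC G b
| DC_Gen  : forall a b, DerC G (CImp (renC S b) a) -> DerC G (CImp b (CAll a))
| DC_ExR  : forall a b, DerC G (CImp a (renC S b)) -> DerC G (CImp (CEx a) b).

Fixpoint embC (p : cform) : prop :=
  match p with
  | CVar i l => PVar i l
  | CFalse => PFalse
  | CAnd a b => PAnd (embC a) (embC b)
  | COr a b => POr (embC a) (embC b)
  | CImp a b => PImp (embC a) (embC b)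
  | CEx a => PEx (embC a)
  | CAll a => PAll (embC a)
  end.

Inductive mform : Type :=
| MVar   : nat -> list nat -> mform
| MFalse : mform
| MAnd   : mform -> mform -> mform
| MOr    : mform -> mform -> mform
| MImp   : mform -> mform -> mform
| MEx    : mform -> mform
| MAll   : mform -> mform
| MBox   : mform -> mform.

Fixpoint renM (r : nat -> nat) (p : mform) : mform :=
  match p with
  | MVar i l => MVar i (map r l)
  | MFalse => MFalse
  | MAnd a b => MAnd (renM r a) (renM r b)
  | MOr a b => MOr (renM r a) (renM r b)
  | MImp a b => MImp (renM r a) (renM r b)
  | MEx a => MEx (renM (up r) a)
  | MAll a => MAll (renM (up r) a)
  | MBox a => MBox (renM r a)
  end.

Inductive DerM (G : list mform) : mform -> Prop :=
| DM_hyp  : forall p, In p G -> DerM G p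
| DM_K    : forall a b, DerM G (MImp a (MImp b a))
| DM_S    : forall a b c, DerM G (MImp (MImp a (MImp b c)) (MImp (MImp a b) (MImp a c)))
| DM_AndE1 : forall a b, DerM G (MImp (MAnd a b) a)
| DM_AndE2 : forall a b, DerM G (MImp (MAnd a b) b)
| DM_AndI : forall a b, DerM G (MImp a (MImp b (MAnd a b)))
| DM_OrI1 : forall a b, DerM G (MImp a (MOr a b))
| DM_OrI2 : forall a b, DerM G (MImp b (MOr a b))
| DM_OrE  : forall a b c, DerM G (MImp (MImp a c) (MImp (MImp b c) (MImp (MOr a b) c)))
| DM_EFQ  : forall a, DerM G (MImp MFalse a)
| DM_DNE  : forall a, DerM G (MImp (MImp (MImp a MFalse) MFalse) a)
| DM_AllE : forall a t, DerM G (MImp (MAll a) (renM (inst t) a))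
| DM_ExI  : forall a t, DerM G (MImp (renM (inst t) a) (MEx a))
| DM_MP   : forall a b, DerM G (MImp a b) -> DerM G a -> DerM G b
| DM_Gen  : forall a b, DerM G (MImp (renM S b) a) -> DerM G (MImp b (MAll a))
| DM_ExR  : forall a b, DerM G (MImp a (renM S b)) -> DerM G (MImp (MEx a) b)
| DM_T    : forall a, DerM G (MImp (MBox a) a)
| DM_4    : forall a, DerM G (MImp (MBox a) (MBox (MBox a)))
| DM_Kbox : forall a b, DerM G (MImp (MBox (MImp a b)) (MImp (MBox a) (MBox b)))
| DM_Nec  : forall a, DerM G a -> DerM G (MBox a).

Fixpoint star (p : mform) : prop :=
  match p with
  | MVar i l => PVar i l
  | MFalse => PFalse
  | MAnd a b => PAnd (star a) (star b)
  | MOr a b => POr (star a) (star b)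
  | MImp a b => PImp (star a) (star b)
  | MEx a => PEx (star a)
  | MAll a => PAll (star a)
  | MBox a => PQuest (QBang (star a))
  end.

(* Main.v *)
Require Import Defs.
From Stdlib Require Import List.
Import ListNotations.

Fixpoint imps (H : list mform) (c : mform) : mform :=
  match H with nil => c | h :: H' => MImp h (imps H' c) end.

Section Hilbert.
Variable G : list mform.
Notation D := (DerM G).

Lemma mI a : D (MImp a a).
Proof. eapply DM_MP. eapply DM_MP. apply (DM_S G a (MImp a a) a). apply DM_K. apply (DM_K G a a). Qed.

Lemma trans a b c : D (MImp a b) -> D (MImp b c) -> D (MImp a c).
Proof. intros h1 h2. eapply DM_MP. eapply DM_MP. apply (DM_S G a b c).
  eapply DM_MP. apply DM_K. exact h2. exact h1. Qed.

Lemma lift H c : D c -> D (imps H c).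
Proof. intro h; induction H as [|x H IH]; simpl; [exact h|].
  eapply DM_MP; [apply DM_K| exact IH]. Qed.

Lemma imps_mp_thm H a b : D (MImp (imps H (MImp a b)) (MImp (imps H a) (imps H b))).
Proof. induction H as [|h H IH]; simpl. apply mI.
  eapply trans. eapply DM_MP. apply (DM_S G h _ (MImp (imps H a) (imps H b))).
  eapply DM_MP. apply DM_K. exact IH. apply DM_S. Qed.

Lemma imps_mp H a b : D (imps H (MImp a b)) -> D (imps H a) -> D (imps H b).
Proof. intros h1 h2. exact (DM_MP _ _ _ (DM_MP _ _ _ (imps_mp_thm H a b) h1) h2). Qed.

Lemma imps_self H a : D (MImp a (imps H a)).
Proof. induction H as [|h H IH]; simpl. apply mI. eapply trans. exact IH. apply DM_K. Qed.

Lemma imps_hyp H a : In a H -> D (imps H a).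
Proof. induction H as [|h H IH]; simpl. intros []. intros [e|i].
  subst; apply imps_self. eapply DM_MP; [apply DM_K| auto]. Qed.

Lemma app1 H x y : D (MImp x y) -> D (imps H x) -> D (imps H y).
Proof. intros t h. exact (imps_mp H x y (lift H _ t) h). Qed.

Lemma app2 H x y z : D (MImp x (MImp y z)) -> D (imps H x) -> D (imps H y) -> D (imps H z).
Proof. intros t h1 h2. exact (imps_mp H y z (imps_mp H x _ (lift H _ t) h1) h2). Qed.

Lemma boxmono a b : D (MImp a b) -> D (MImp (MBox a) (MBox b)).
Proof. intro h. exact (DM_MP _ _ _ (DM_Kbox _ a b) (DM_Nec _ _ h)). Qed.

Lemma box_dist H z : D (MImp (MBox (imps H z)) (imps (map MBox H) (MBox z))).
Proof. induction H as [|h H IH]; simpl. apply mI.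
  change (D (imps [MBox (MImp h (imps H z)); MBox h] (imps (map MBox H) (MBox z)))).
  apply (app1 _ _ _ IH). apply (app2 _ _ _ _ (DM_Kbox G h (imps H z)));
  apply imps_hyp; simpl; auto. Qed.

Definition stable x := D (MImp x (MBox x)).

Lemma unbox H c : Forall stable H -> D (MImp (imps (map MBox H) c) (imps H c)).
Proof. induction 1 as [|h H st F IH]; simpl. apply mI.
  change (D (imps [MImp (MBox h) (imps (map MBox H) c); h] (imps H c))).
  apply (app1 _ _ _ IH). eapply imps_mp. apply imps_hyp; simpl; auto.
  apply (app1 _ _ _ st). apply imps_hyp; simpl; auto. Qed.

Lemma box_intro H z : Forall stable H -> D (imps H z) -> D (imps H (MBox z)).
Proof. intros F h. eapply DM_MP. apply (unbox _ _ F).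
  eapply DM_MP. apply box_dist. apply DM_Nec. exact h. Qed.

End Hilbert.

Fixpoint tP (p : prop) : mform :=
  match p with
  | PVar i l => MVar i l
  | PFalse => MFalse
  | PAnd a b => MAnd (tP a) (tP b)
  | POr a b => MOr (tP a) (tP b)
  | PImp a b => MImp (tP a) (tP b)
  | PEx a => MEx (tP a)
  | PAll a => MAll (tP a)
  | PQuest a => tQ a
  end
with tQ (a : prob) : mform :=
  match a with
  | QVar _ _ => MFalse
  | QBot => MFalse
  | QAnd x y => MAnd (tQ x) (tQ y)
  | QOr x y => MOr (tQ x) (tQ y)
  | QImp x y => MBox (MImp (tQ x) (tQ y))
  | QEx x => MEx (tQ x)
  | QAll x => MBox (MAll (tQ x))
  | QBang p => MBox (tP p)
  end.

Scheme prop_mut := Induction for prop Sort Prop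
  with prob_mut := Induction for prob Sort Prop.

Lemma t_ren : (forall p r, tP (renP r p) = renM r (tP p)) /\
              (forall a r, tQ (renQ r a) = renM r (tQ a)).
Proof.
  split; [apply (prop_mut (fun p => forall r, tP (renP r p) = renM r (tP p))
                          (fun a => forall r, tQ (renQ r a) = renM r (tQ a)))
         | apply (prob_mut (fun p => forall r, tP (renP r p) = renM r (tP p))
                          (fun a => forall r, tQ (renQ r a) = renM r (tQ a)))];
  intros; simpl; try congruence.
Qed.

Lemma renM_id_comp x : forall r s, (forall n, r (s n) = n) -> renM r (renM s x) = x.
Proof.
  induction x; intros r s e; simpl; try (f_equal; eauto; fail).
  - f_equal. induction l; simpl; congruence.
  - f_equal. apply IHx. intros [|n]; simpl; congruence.
  - f_equal. apply IHx. intros [|n]; simpl; congruence.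
Qed.

Lemma stableT G a : DerM G (MImp (tQ a) (MBox (tQ a))).
Proof.
  induction a; simpl; try apply DM_4; try apply DM_EFQ.
  - change (DerM G (imps [MAnd (tQ a1) (tQ a2)] (MBox (MAnd (tQ a1) (tQ a2))))).
    eapply app2. eapply DM_MP. apply (box_dist G [tQ a1; tQ a2]). apply DM_Nec. apply DM_AndI.
    + apply (app1 _ _ _ _ IHa1). eapply (app1 _ _ _ _ (DM_AndE1 _ _ _)). apply imps_hyp; simpl; auto.
    + apply (app1 _ _ _ _ IHa2). eapply (app1 _ _ _ _ (DM_AndE2 _ _ _)). apply imps_hyp; simpl; auto.
  - eapply DM_MP. eapply DM_MP. apply DM_OrE.
    eapply trans. exact IHa1. apply boxmono. apply DM_OrI1.
    eapply trans. exact IHa2. apply boxmono. apply DM_OrI2.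
  - apply DM_ExR. simpl. eapply trans. exact IHa. apply boxmono.
    pose proof (DM_ExI G (renM (up S) (tQ a)) 0) as h.
    rewrite renM_id_comp in h. exact h. intros [|n]; reflexivity.
Qed.

Scheme DerP_mut := Induction for DerP Sort Prop
  with DerQ_mut := Induction for DerQ Sort Prop.

Lemma stB G x : stable G (MBox x).
Proof. apply DM_4. Qed.
Lemma stT G a : stable G (tQ a).
Proof. apply stableT. Qed.

Lemma Tel G x y : DerM G (MBox (MImp x y)) -> DerM G (MImp x y).
Proof. intro h. eapply DM_MP. apply DM_T. exact h. Qed.

Lemma iffI G a : DerM G (MAnd (MImp a a) (MImp a a)).
Proof. eapply DM_MP. eapply DM_MP. apply DM_AndI. apply mI. apply mI. Qed.

Section L.
Variable G : list mform.
Notation D := (DerM G).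
Lemma LK x y : stable G x -> D (MBox (MImp x (MBox (MImp y x)))).
Proof. intro s. apply DM_Nec. apply (box_intro G [x]). auto. apply DM_K. Qed.

Lemma LS x y c : D (MBox (MImp (MBox (MImp x (MBox (MImp y c))))
         (MBox (MImp (MBox (MImp x y)) (MBox (MImp x c)))))).
Proof. apply DM_Nec. apply (box_intro G [MBox (MImp x (MBox (MImp y c)))]).
  constructor; [apply stB| constructor].
  change (D (imps [MBox (MImp x (MBox (MImp y c))); MBox (MImp x y)] (MBox (MImp x c)))).
  apply box_intro. repeat constructor; apply stB.
  change (D (imps [MBox (MImp x (MBox (MImp y c))); MBox (MImp x y); x] c)).
  eapply imps_mp. eapply (app1 _ _ _ _ (DM_T _ _)).
  eapply imps_mp. eapply (app1 _ _ _ _ (DM_T _ _)). apply imps_hyp; simpl; auto.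
  apply imps_hyp; simpl; auto.
  eapply imps_mp. eapply (app1 _ _ _ _ (DM_T _ _)). apply imps_hyp; simpl; auto.
  apply imps_hyp; simpl; auto. Qed.

Lemma LAndI x y : stable G x -> D (MBox (MImp x (MBox (MImp y (MAnd x y))))).
Proof. intro s. apply DM_Nec. apply (box_intro G [x]). auto. apply DM_AndI. Qed.

Lemma LOrE x y c : D (MBox (MImp (MBox (MImp x c))
         (MBox (MImp (MBox (MImp y c)) (MBox (MImp (MOr x y) c)))))).
Proof. apply DM_Nec. apply (box_intro G [MBox (MImp x c)]).
  constructor; [apply stB| constructor].
  change (D (imps [MBox (MImp x c); MBox (MImp y c)] (MBox (MImp (MOr x y) c)))).
  apply box_intro. repeat constructor; apply stB.
  eapply app2. apply DM_OrE.
  eapply (app1 _ _ _ _ (DM_T _ _)). apply imps_hyp; simpl; auto.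
  eapply (app1 _ _ _ _ (DM_T _ _)). apply imps_hyp; simpl; auto. Qed.

Lemma LAllE x t : D (MBox (MImp (MBox (MAll x)) (renM (inst t) x))).
Proof. apply DM_Nec. eapply trans. apply DM_T. apply DM_AllE. Qed.

Lemma LGen x y : stable G y -> D (MBox (MImp (renM S y) x)) -> D (MBox (MImp y (MBox (MAll x)))).
Proof. intros s h. apply DM_Nec. apply (box_intro G [y]). auto.
  apply DM_Gen. apply Tel. exact h. Qed.

Lemma Lbimp p q : D (MBox (MImp (MBox (MImp p q)) (MBox (MImp (MBox p) (MBox q))))).
Proof. apply DM_Nec. apply (box_intro G [MBox (MImp p q)]). constructor; [apply stB|constructor].
  apply DM_Kbox. Qed.
End L.

Lemma sound G : (forall p, DerP G p -> DerM (map tP G) (tP p)) /\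
                (forall a, DerQ G a -> DerM (map tP G) (tQ a)).
Proof.
  pose proof t_ren as [RP RQ].
  set (G' := map tP G).
  split;
  [apply (DerP_mut G (fun p _ => DerM G' (tP p)) (fun a _ => DerM G' (tQ a)))
  |apply (DerQ_mut G (fun p _ => DerM G' (tP p)) (fun a _ => DerM G' (tQ a)))];
  intros; simpl in *; rewrite ?RP, ?RQ in *;
  try solve [ assumption | apply LS | apply LOrE | apply LAllE | apply Lbimp
  | apply LK; apply stableT | apply LAndI; apply stableT | apply LGen; [apply stableT|assumption]
  | apply DM_hyp; apply in_map; assumption
  | apply DM_K | apply DM_S | apply DM_AndE1 | apply DM_AndE2 | apply DM_AndI
  | apply DM_OrI1 | apply DM_OrI2 | apply DM_OrE | apply DM_EFQ | apply DM_DNE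
  | apply DM_AllE | apply DM_ExI | apply DM_T | apply mI | apply iffI
  | eapply DM_MP; eassumption
  | eapply DM_MP; [apply Tel; eassumption | eassumption]
  | apply DM_Gen; assumption | apply DM_ExR; assumption
  | apply DM_Nec; solve [ apply DM_AndE1 | apply DM_AndE2 | apply DM_OrI1 | apply DM_OrI2
     | apply DM_EFQ | apply DM_ExI | apply DM_T | assumption | apply stableT
     | apply DM_ExR; apply Tel; assumption ] ].

Qed.

Fixpoint er (p : mform) : cform :=
  match p with
  | MVar i l => CVar i l
  | MFalse => CFalse
  | MAnd a b => CAnd (er a) (er b)
  | MOr a b => COr (er a) (er b)
  | MImp a b => CImp (er a) (er b)
  | MEx a => CEx (er a)
  | MAll a => CAll (er a)
  | MBox a => er a
  end.

Lemma er_ren p : forall r, er (renM r p) = renC r (er p).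
Proof. induction p; intros; simpl; congruence. Qed.

Lemma cI G a : DerC G (CImp a a).
Proof. eapply DC_MP. eapply DC_MP. apply (DC_S G a (CImp a a) a). apply DC_K. apply (DC_K G a a). Qed.

Lemma er_sound G a : DerM G a -> DerC (map er G) (er a).
Proof.
  induction 1; simpl in *; rewrite ?er_ren in *;
  try solve [assumption | apply cI | apply DC_hyp; apply in_map; auto | constructor; auto | econstructor; eauto].
Qed.

Lemma er_emb p : er (tP (embC p)) = p.
Proof. induction p; simpl; congruence. Qed.
Lemma t_star A : tP (star A) = A.
Proof. induction A; simpl; congruence. Qed.

Theorem theorem3p2 :
  (forall (ps : list cform) (p : cform),
      DerP (map embC ps) (embC p) -> DerC ps p)
  /\
  (forall (As : list mform) (A : mform),
      DerP (map star As) (star A) -> DerM As A).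
Proof.
  split.
  - intros ps p h. apply (proj1 (sound _)) in h. apply er_sound in h.
    rewrite er_emb, !map_map in h.
    rewrite (map_ext _ (fun x => x)) in h by apply er_emb. rewrite map_id in h. exact h.
  - intros As A h. apply (proj1 (sound _)) in h.
    rewrite t_star, map_map in h.
    rewrite (map_ext _ (fun x => x)) in h by apply t_star. rewrite map_id in h. exact h.
Qed.
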